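(* Let $r\ge 1$. If an $r$-cap exists, then $r\le R$; specifically, there is a constant $b$ such that for every $k\in\{0,1,2,\dots\}$ there is a wall whose graph has clique size $k$ and which uses at least $rk-b$ colors.
   Context: All graphs are finite; $\omega(G)$ is the clique number. $R := \sup\{\chi_{FF}(G)/\omega(G) : G \text{ a nonempty interval graph}\}$, where $\chi_{FF}(G)$ is the maximum over all vertex orders of the number of colors used by the first-fit algorithm (which colors vertices in order, giving each the least positive integer not used on an earlier neighbor). An interval graph $G=(V,E)$ comes with an interval representation $v\mapsto I_v$ (intervals of $\mathbb{R}$, distinct $u,v$ adjacent iff $I_u\cap I_v\ne\emptyset$). $N[v]$ is the closed neighborhood of $v$, and $f(U)$ is the image of $U$ under $f$. A wall is a pair $(G,f)$ where $G$ is an interval graph on vertex set $V$ with a given interval representation, $f\colon V\to\{1,2,\dots\}$ is a proper coloring, and $f(N[v])\supseteq\{1,\dots,f(v)\}$ for every $v\in V$; it uses $|f(V)|$ colors, and its clique size is $\omega(G)$. An $r$-cap is a tuple $(G,f,v\mapsto I_v, v\mapsto J_v, v\mapsto c_v)$ where: $G$ is a finite nonempty interval graph on vertex set $V$ with interval representation $v\mapsto I_v$ (intervals of finite length); $f\colon V\to\{0,-1,-2,\dots\}$ is a proper coloring of $G$ with $f(v)=0$ for some $v\in V$; for each $v\in V$, $J_v\subseteq I_v$ is an interval of positive length, and for all $u,v\in V$, $J_u\cap J_v\ne\emptyset$ implies $J_u=J_v$; writing $C_v := f(\{u\in V : I_u\cap J_v\ne\emptyset\})$, for each $v\in V$ there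 is $c_v\in\{-1,-2,\dots\}$ with $|C_v\cap(-\infty,c_v]|=0$, $|C_v\cap(c_v,0]|\le -c_v/r$, and $\mathbb{Z}\cap(c_v,f(v)]\subseteq f(N[v])$. *)

(* Defs.v *)
From HB Require Import structures.
From mathcomp Require Import all_boot all_order all_algebra.
From mathcomp Require Import boolp classical_sets reals constructive_ereal ereal.
From mathcomp Require Import Rstruct.
From mathcomp Require Import fingroup perm.
From Stdlib Require Import Rdefinitions.
Set Implicit Arguments. Unset Strict Implicit. Unset Printing Implicit Defensive.
Import Order.TTheory GRing.Theory Num.Theory.
Local Open Scope ring_scope.

Notation R := Rdefinitions.R.

Definition is_interval (S : R -> Prop) : Prop :=
  (exists x, S x) /\ (forall x y z, S x -> S z -> x <= y -> y <= z -> S y).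
Definition finite_length (S : R -> Prop) : Prop :=
  exists a b : R, forall x, S x -> a <= x /\ x <= b.
Definition positive_length (S : R -> Prop) : Prop :=
  exists x y : R, S x /\ S y /\ x < y.
Definition meets (S T : R -> Prop) : Prop := exists x, S x /\ T x.

Section Graphs.
Variable V : finType.
Variable I : V -> R -> Prop.

Definition adj (u v : V) : Prop := u <> v /\ meets (I u) (I v).
Definition in_closed_nbhd (u v : V) : Prop := u = v \/ adj u v.

Definition is_clique (A : {set V}) : Prop :=
  forall u v, u \in A -> v \in A -> u <> v -> adj u v.
Definition omega : nat := (\max_(A : {set V} | `[< is_clique A >]) #|A|)%N.

(* [ff_run done s]: color the vertices of s in order, [done] being the list of
   already colored (vertex, color) pairs; each vertex gets the least positive
   integer not used on an earlier neighbor. *)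
Fixpoint ff_run (done : seq (V * nat)) (s : seq V) : seq (V * nat) :=
  match s with
  | [::] => done
  | v :: s' =>
      let used := [seq p.2 | p <- done & `[< adj p.1 v >]] in
      let c := (find (fun n => n.+1 \notin used) (iota 0 (size used).+1)).+1 in
      ff_run (rcons done (v, c)) s'
  end.
Definition ff_colors (s : seq V) : nat :=
  size (undup [seq p.2 | p <- ff_run [::] s]).
Definition chiFF : nat := (\max_(p : {perm V}) ff_colors [seq p x | x <- enum V])%N.

Definition is_wall (f : V -> nat) : Prop :=
  [/\ (forall v, is_interval (I v)),
      (forall v, leq 1 (f v)),
      (forall u v, adj u v -> f u <> f v) &
      (forall v c, leq 1 c -> leq c (f v) ->
          exists u, in_closed_nbhd u v /\ f u = c)].
Definition colors_used (f : V -> nat) : nat := size (undup [seq f v | v <- enum V]).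

(* C_v = f({u : I_u meets J_v}) as a list (with repetitions) *)
Definition Cset (f : V -> int) (J : V -> R -> Prop) (v : V) : seq int :=
  [seq f u | u <- enum V & `[< meets (I u) (J v) >]].

Definition is_cap (r : R) (f : V -> int) (J : V -> R -> Prop) (c : V -> int) : Prop :=
  [/\ (exists v : V, True) /\ (forall v, is_interval (I v) /\ finite_length (I v)),
      ((forall v, f v <= 0) /\ (exists v, f v = 0)) /\
        (forall u v, adj u v -> f u <> f v),
      (forall v, [/\ is_interval (J v), positive_length (J v)
                   & forall x, J v x -> I v x]),
      (forall u v, meets (J u) (J v) -> forall x, J u x <-> J v x) &
      (forall v,
         [/\ c v <= -1,
             size (undup [seq z <- Cset f J v | z <= c v]) = 0%N,
             ((size (undup [seq z <- Cset f J v | (c v < z) && (z <= 0)]))%:R : R)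
               <= - ((c v)%:~R) / r &
             (forall z : int, c v < z -> z <= f v ->
                 exists u, in_closed_nbhd u v /\ f u = z)])].
End Graphs.

Definition Rsup : \bar R :=
  ereal_sup [set x : \bar R | exists (V : finType) (I : V -> R -> Prop),
      [/\ (exists v : V, True), (forall v, is_interval (I v)) &
          x = ((chiFF I)%:R / (omega I)%:R : R)%:E]].

(* Main.v *)
Require Import Defs.
From HB Require Import structures.
From mathcomp Require Import all_boot all_order all_algebra.
From mathcomp Require Import boolp classical_sets reals constructive_ereal ereal.
From mathcomp Require Import Rstruct.
From mathcomp Require Import fingroup perm.
From mathcomp Require Import zify ring lra.
Import Order.TTheory GRing.Theory Num.Theory.
Local Open Scope ring_scope.


Lemma pb_interval (P : R -> Prop) (a m : R) : 0 < m -> is_interval P ->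
  is_interval (fun z : R => P (a + m * z)).
Proof.
move=> m0 [[t Ht] Hc]; split.
  exists ((t - a) / m); rewrite mulrC divfK ?gt_eqF //.
  by have -> : a + (t - a) = t by ring.
move=> x y z Hx Hz xy yz; apply: (Hc _ _ _ Hx Hz).
  by rewrite lerD2l ler_pM2l.
by rewrite lerD2l ler_pM2l.
Qed.

Lemma pb_meets (P Q : R -> Prop) (a m : R) : 0 < m ->
  Defs.meets (fun z : R => P (a + m * z)) (fun z : R => Q (a + m * z)) <-> Defs.meets P Q.
Proof.
move=> m0; split.
  by move=> [z [H1 H2]]; exists (a + m * z).
move=> [t [H1 H2]]; exists ((t - a) / m).
rewrite mulrC divfK ?gt_eqF //.
by have -> : a + (t - a) = t by ring.
Qed.

Section PB.
Variables (V : finType) (I : V -> R -> Prop) (a m : R).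
Hypothesis m0 : 0 < m.
Definition pbI := fun v (z : R) => I v (a + m * z).

Lemma pb_adj u v : adj pbI u v <-> adj I u v.
Proof.
rewrite /adj /pbI; split; case=> H1 H2; split => //; first by rewrite -(pb_meets _ _ a m m0).
by rewrite (pb_meets _ _ a m m0).
Qed.

Lemma pb_wall (f : V -> nat) : is_wall I f -> is_wall pbI f.
Proof.
case=> H1 H2 H3 H4; split => //.
- by move=> v; apply: pb_interval.
- by move=> u v /pb_adj; apply: H3.
- move=> v k k1 kv; case: (H4 v k k1 kv) => u [Hu Hf]; exists u; split => //.
  by case: Hu => [->|/pb_adj H]; [left|right].
Qed.
End PB.

Lemma card_sum_set (T1 T2 : finType) (P : pred (T1 + T2)) :
  #|[set w | P w]| = (#|[set x | P (inl x)]| + #|[set y | P (inr y)]|)%N.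
Proof.
rewrite -!sum1_card.
rewrite (eq_bigl P); last by move=> w; rewrite inE.
rewrite big_sumType; congr (_ + _)%N; apply: eq_bigl => x; by rewrite inE.
Qed.

Lemma card_tag_le (I0 : finType) (T_ : I0 -> finType) (P : pred {i : I0 & T_ i}) (i0 : I0) :
  (forall s, P s -> tag s = i0) ->
  (#|[set s | P s]| <= #|[set q : T_ i0 | P (Tagged T_ q)]|)%N.
Proof.
move=> Ht.
apply: (leq_trans _ (leq_imset_card (Tagged T_) _)).
apply: subset_leq_card; apply/fintype.subsetP => -[i q]; rewrite inE => HP.
have /= Hi := Ht _ HP; subst i0.
by apply: imset_f; rewrite inE.
Qed.


Section Helly.
Variables (V : finType) (I : V -> R -> Prop).
Hypothesis Hint : forall v, is_interval (I v).

Lemma helly (A : {set V}) (u0 : V) : u0 \in A -> is_clique I A ->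
  exists x, forall v, v \in A -> I v x.
Proof.
move=> u0A Hcl.
have HH : forall uv : V * V, exists t, uv.1 \in A -> uv.2 \in A ->
    I uv.1 t /\ I uv.2 t.
  move=> [u v] /=.
  case: (pselect (u = v)) => [<-|Huv].
    by case: (Hint u) => [[t Ht] _]; exists t.
  case: (pselect (u \in A /\ v \in A)) => [[uA vA]|Hn].
    by case: (Hcl u v uA vA Huv) => _ [t [H1 H2]]; exists t.
  by exists 0 => uA vA; exfalso; apply: Hn.
case: (boolp.choice HH) => p Hp.
pose m := fun u => p (u, [arg min_(w < u | w \in A) p (u, w)]%O).
have Hm1 : forall u w, u \in A -> w \in A -> m u <= p (u, w).
  move=> u w uA wA; rewrite /m.
  by case: arg_minP => // i iA Hi; apply: Hi.
have Hm2 : forall u, u \in A -> I u (m u).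
  move=> u uA; rewrite /m.
  by case: arg_minP => // i iA Hi; case: (Hp (u, i) uA iA).
pose us := [arg max_(u > u0 | u \in A) m u]%O.
have usA : us \in A by rewrite /us; case: arg_maxP.
have Hms : forall v, v \in A -> m v <= m us.
  by move=> v vA; rewrite /us; case: arg_maxP => // i iA Hi; apply: Hi.
exists (m us) => v vA.
case: (Hint v) => _ Hcv; apply: (Hcv (m v) _ (p (us, v))).
- exact: Hm2.
- by case: (Hp (us, v) usA vA).
- exact: Hms.
- exact: Hm1.
Qed.

Lemma omega_le (k : nat) :
  (forall x, (#|[set v | `[< I v x >]]| <= k)%N) -> (omega I <= k)%N.
Proof.
move=> Hk; rewrite /omega; apply/bigmax_leqP => A /asboolP Hcl.
case: (set_0Vmem A) => [->|[u0 u0A]]; first by rewrite cards0.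
case: (@helly A u0 u0A Hcl) => x Hx.
apply: (leq_trans _ (Hk x)); apply: subset_leq_card.
apply/fintype.subsetP => v vA.
by rewrite inE; apply/asboolP; apply: Hx.
Qed.

End Helly.

Lemma omega_ge (V : finType) (I : V -> R -> Prop) (A : {set V}) :
  is_clique I A -> (#|A| <= omega I)%N.
Proof.
move=> Hcl; rewrite /omega.
by apply: (leq_bigmax_cond (P := fun A => `[< is_clique I A >]) (F := fun A => #|A|)); apply/asboolP.
Qed.


Section FF.
Variables (V : finType) (I : V -> R -> Prop) (f : V -> nat).
Hypothesis W : is_wall I f.

Definition fe := fun x y : V => (f x <= f y)%N.

Lemma find_iota_eq (P : pred nat) m j :
  (forall n, (n < j)%N -> ~~ P n) -> P j -> (j < m)%N -> find P (iota 0 m) = j.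
Proof.
move=> Hb Hj Hjm.
have hP : has P (iota 0 m) by apply/hasP; exists j => //; rewrite mem_iota.
have Hf : (find P (iota 0 m) < m)%N by rewrite -{2}(size_iota 0 m) -has_find.
apply/eqP; rewrite eqn_leq; apply/andP; split.
  rewrite leqNgt; apply/negP => Hlt.
  by move: (before_find 0 Hlt); rewrite nth_iota // Hj.
rewrite leqNgt; apply/negP => Hlt.
move: (nth_find 0 hP); rewrite nth_iota // add0n => HP.
by move: (Hb _ Hlt); rewrite HP.
Qed.

Lemma ff_color pre v s' :
  pairwise fe (pre ++ v :: s') -> (forall u, u \in pre ++ v :: s') ->
  let used := [seq p.2 | p <- [seq (x, f x) | x <- pre] & `[< adj I p.1 v >]] in
  (find (fun n => n.+1 \notin used) (iota 0 (size used).+1)).+1 = f v.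
Proof.
case: W => _ Hpos Hprop Hnb.
move=> Hpw Hall used.
have Hused : used = [seq f x | x <- pre & `[< adj I x v >]].
  by rewrite /used filter_map -map_comp.
rewrite pairwise_cat pairwise_cons in Hpw.
case/and3P: Hpw => Hrel _ /andP[Hv _].
have Hpre : forall x, x \in pre -> (f x <= f v)%N.
  by move=> x xin; move/allrelP: Hrel => /(_ x v xin); rewrite inE eqxx => /(_ isT).
have Hpost : forall y, y \in s' -> (f v <= f y)%N.
  by move=> y yin; move/allP: Hv => /(_ y yin).
have Hin : forall n, (0 < n)%N -> (n < f v)%N -> n \in used.
  move=> n n0 nlt; case: (Hnb v n n0 (ltnW nlt)) => u [Hu Hfu].
  case: Hu => [Huv|Hadj]; first by subst u; rewrite Hfu ltnn in nlt.
  rewrite Hused; apply/mapP; exists u => //; rewrite mem_filter; apply/andP; split.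
    by apply/asboolP.
  move: (Hall u); rewrite mem_cat inE => /orP[//|/orP[/eqP Huv|Hus]].
    by subst u; rewrite Hfu ltnn in nlt.
  by move: (Hpost u Hus); rewrite Hfu leqNgt nlt.
have Hnot : f v \notin used.
  rewrite Hused; apply/negP => /mapP[x]; rewrite mem_filter => /andP[/asboolP Hadj _] Hfx.
  by apply: (Hprop x v Hadj).
have Hfv := Hpos v.
have -> : find (fun n => n.+1 \notin used) (iota 0 (size used).+1) = (f v).-1.
  apply: find_iota_eq.
  - move=> n nlt; rewrite negbK; apply: Hin => //.
    by rewrite -(ltn_predK Hfv) ltnS.
  - by rewrite (ltn_predK Hfv).
  - rewrite ltnS.
    have -> : (f v).-1 = size (iota 1 (f v).-1) by rewrite size_iota.
    apply: uniq_leq_size; first exact: iota_uniq.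
    move=> n; rewrite mem_iota => /andP[n1 n2]; apply: Hin => //.
    by rewrite add1n (ltn_predK Hfv) in n2.
by rewrite (ltn_predK Hfv).
Qed.

Lemma ff_run_wall s pre :
  pairwise fe (pre ++ s) -> (forall u, u \in pre ++ s) ->
  ff_run I [seq (x, f x) | x <- pre] s = [seq (x, f x) | x <- pre ++ s].
Proof.
elim: s pre => [|v s' IH] pre Hpw Hall /=; first by rewrite cats0.
rewrite (@ff_color pre v s' Hpw Hall).
have -> : rcons [seq (x, f x) | x <- pre] (v, f v) = [seq (x, f x) | x <- rcons pre v].
  by rewrite map_rcons.
rewrite IH -?cat_rcons //.
- by rewrite cat_rcons.
- by move=> u; rewrite cat_rcons.
Qed.

Lemma fe_trans : transitive fe.
Proof. by move=> y x z; rewrite /fe; apply: leq_trans. Qed.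
Lemma fe_total : total fe.
Proof. by move=> x y; rewrite /fe leq_total. Qed.

Lemma chiFF_ge : (colors_used f <= chiFF I)%N.
Proof.
set s := sort fe (enum V).
have Hperm : perm_eq s (enum V) by rewrite perm_sort perm_refl.
have Hsz : size s = size (enum V) by apply: perm_size.
have Hus : uniq s by rewrite (perm_uniq Hperm) enum_uniq.
pose g := fun x : V => nth x s (index x (enum V)).
have Hidx : forall x, (index x (enum V) < size s)%N.
  by move=> x; rewrite Hsz index_mem mem_enum.
have ginj : injective g.
  move=> x y; rewrite /g (set_nth_default x y (Hidx y)) => /eqP.
  rewrite nth_uniq ?Hidx // => /eqP Hi.
  exact: (index_inj x (mem_enum _ x) (mem_enum _ y) Hi).
pose p := perm ginj.
have Hmap : [seq p x | x <- enum V] = s.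
  have Hsz2 : size [seq p x | x <- enum V] = size s by rewrite size_map Hsz.
  case Es: s Hsz2 => [|x0 r] Hsz2; first by apply: size0nil.
  rewrite -Es; apply: (eq_from_nth (x0:=x0)); first by rewrite Es.
  move=> i; rewrite size_map -Hsz => Hi.
  rewrite (nth_map x0); last by rewrite -Hsz.
  rewrite permE /g index_uniq ?enum_uniq -?Hsz //.
  by apply: set_nth_default.
have Hpw : pairwise fe s.
  by rewrite -sorted_pairwise; [apply: sort_sorted; exact: fe_total | exact: fe_trans].
have Hrun : ff_run I [::] s = [seq (x, f x) | x <- s].
  by apply: (@ff_run_wall s [::]) => // u; rewrite (perm_mem Hperm) mem_enum.
apply: (leq_trans _ (leq_bigmax p)).
rewrite Hmap /ff_colors Hrun -map_comp /colors_used.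
rewrite (perm_size (perm_undup (perm_mem (perm_map f Hperm)))) //.
Qed.

End FF.

Set Implicit Arguments.


Record wall := Wall { wV : finType; wI : wV -> R -> Prop; wf : wV -> nat }.

Definition winv (r B : R) (N : nat) (w : wall) : Prop :=
  [/\ is_wall (wI w) (wf w),
      (forall v x, wI w v x -> 0 <= x <= 1),
      (forall v, (wf w v <= N)%N),
      ((0 < N)%N -> exists v, wf w v = N) &
      (forall x, (#|[set v | `[< wI w v x >]]|%:R : R) <= N%:R / r + B)].

Lemma winv0_empty r B w : winv r B 0 w -> forall v : wV w, False.
Proof.
case=> [[_ Hp _ _] _ Hle _ _] v.
by move: (Hp v) (Hle v); rewrite leqn0 => /[swap] /eqP ->.
Qed.

Section Build.
Variables (r : R) (Vc : finType) (Ic : Vc -> R -> Prop) (fc : Vc -> int)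
          (J : Vc -> R -> Prop) (c : Vc -> int).
Hypothesis r1 : 1 <= r.
Hypothesis Hcap : is_cap Ic r fc J c.
Variable ch : (R -> Prop) -> R * R.
Hypothesis Hch : forall P, positive_length P -> [/\ P (ch P).1, P (ch P).2 & (ch P).1 < (ch P).2].
Variable N : nat.
Hypothesis N1 : (0 < N)%N.
Variable Wf : nat -> wall.
Definition B := (#|Vc|%:R : R).
Hypothesis HW : forall M, (M < N)%N -> winv r B M (Wf M).

Definition Mv v := (N - `|c v|)%N.
Definition Wv v := Wf (Mv v).
Definition nV := #|Vc|.
Definition xl v := (ch (J v)).1.
Definition xr v := (ch (J v)).2.
Definition del v := (xr v - xl v) / (2 * nV)%:R.
Definition al v := xl v + (2 * enum_rank v)%:R * del v.
Definition be v := al v + del v.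
Definition Ie v (q : wV (Wv v)) (t : R) := wI (Wv v) q (- al v / del v + (del v)^-1 * t).

Definition keep u := (0 < fc u + N%:Z).
Definition Vn := ({u : Vc | keep u} + {v : Vc & wV (Wv v)})%type.
Definition In (w : Vn) : R -> Prop :=
  match w with inl u => Ic (val u) | inr s => @Ie (tag s) (tagged s) end.
Definition fn (w : Vn) : nat :=
  match w with inl u => absz (fc (val u) + N%:Z) | inr s => wf _ (tagged s) end.

Lemma cap_int v : is_interval (Ic v).
Proof. by case: Hcap => [[_ H] _ _ _ _]; case: (H v). Qed.
Lemma cap_le0 v : fc v <= 0.
Proof. by case: Hcap => [_ [[H _] _] _ _ _]. Qed.
Lemma cap_prop u v : adj Ic u v -> fc u <> fc v.
Proof. by case: Hcap => [_ [_ H] _ _ _]; apply: H. Qed.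
Arguments cap_prop {u v}.
Lemma cap_J v : [/\ is_interval (J v), positive_length (J v) & forall x, J v x -> Ic v x].
Proof. by case: Hcap => [_ _ H _ _]. Qed.
Lemma cap_Jeq u v : Defs.meets (J u) (J v) -> J u = J v.
Proof.
case: Hcap => [_ _ _ H _] Hm; apply: funext => x; apply: propext; exact: H.
Qed.
Lemma cap_c v : [/\ c v <= -1,
             size (undup [seq z <- Cset Ic fc J v | z <= c v]) = 0%N,
             ((size (undup [seq z <- Cset Ic fc J v | (c v < z) && (z <= 0)]))%:R : R)
               <= - ((c v)%:~R) / r &
             (forall z : int, c v < z -> z <= fc v ->
                 exists u, in_closed_nbhd Ic u v /\ fc u = z)].
Proof. by case: Hcap => [_ _ _ _ H]. Qed.

Lemma nV_gt0 : (0 < nV)%N.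
Proof. by case: Hcap => [[[v _] _] _ _ _ _]; rewrite /nV; apply/card_gt0P; exists v. Qed.

Lemma xlr v : [/\ J v (xl v), J v (xr v) & xl v < xr v].
Proof. by case: (cap_J v) => _ Hp _; exact: Hch. Qed.

Lemma del_gt0 v : 0 < del v.
Proof.
case: (xlr v) => _ _ H; rewrite /del divr_gt0 // ?subr_gt0 //.
by rewrite ltr0n muln_gt0 nV_gt0.
Qed.

Lemma del_eq v : (2 * nV)%:R * del v = xr v - xl v.
Proof. by rewrite /del mulrC divfK // pnatr_eq0 muln_eq0 negb_or /= -lt0n nV_gt0. Qed.

Lemma sub_J v t : al v <= t <= be v -> J v t.
Proof.
case/andP=> H1 H2; case: (xlr v) => Hl Hr Hlt.
case: (cap_J v) => [[_ Hc] _ _].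
have Hd := del_gt0 v; have He := del_eq v.
have Hi : (enum_rank v < nV)%N by rewrite /nV; exact: ltn_ord.
have Hi' : ((2 * enum_rank v).+1%:R : R) <= (2 * nV)%:R by rewrite ler_nat; lia.
have H0 : (0 : R) <= (2 * enum_rank v)%:R by [].
apply: (Hc (xl v) t (xr v) Hl Hr).
  apply: le_trans H1; rewrite /al lerDl; exact: mulr_ge0 (ltW Hd).
apply: (le_trans H2); rewrite /be /al.
have : ((2 * enum_rank v).+1%:R : R) * del v <= (2 * nV)%:R * del v.
  by rewrite ler_pM2r.
rewrite He -addn1 natrD; nra.
Qed.
Arguments sub_J {v t}.

Lemma Mv_lt v : (Mv v < N)%N.
Proof. by case: (cap_c v) => H _ _ _; rewrite /Mv; lia. Qed.

Lemma HWv v : winv r B (Mv v) (Wv v).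
Proof. exact: HW (Mv_lt v). Qed.

Lemma Ie_in v q t : @Ie v q t -> al v <= t <= be v.
Proof.
rewrite /Ie => H; case: (HWv v) => _ Hs _ _ _.
have /andP[h1 h2] := Hs _ _ H.
have Hd := del_gt0 v.
set z := - al v / del v + (del v)^-1 * t in h1 h2.
have E : t = al v + z * del v by rewrite /z; field; rewrite gt_eqF.
rewrite /be E; apply/andP; split; nra.
Qed.
Arguments Ie_in {v q t}.

Lemma rank_sep v v' : (enum_rank v < enum_rank v')%N -> xl v = xl v' -> del v = del v' ->
  be v < al v'.
Proof.
move=> Hlt Ex Ed; rewrite /be /al -Ex -Ed.
have Hd := del_gt0 v.
have : ((2 * enum_rank v)%:R : R) + 2 <= (2 * enum_rank v')%:R.
  have h : (2 * enum_rank v + 2 <= 2 * enum_rank v')%N by lia.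
  by move: h; rewrite -(ler_nat R) natrD.
nra.
Qed.

Lemma disj v v' (t : R) : al v <= t <= be v -> al v' <= t <= be v' -> v = v'.
Proof.
move=> H1 H2.
have EJ : J v = J v' by apply: cap_Jeq; exists t; split; apply: sub_J.
have Ex : xl v = xl v' by rewrite /xl EJ.
have Ed : del v = del v' by rewrite /del /xl /xr EJ.
case: (ltngtP (enum_rank v) (enum_rank v')) => Hr.
- have h := @rank_sep v v' Hr Ex Ed; case/andP: H1 => [h1 h2]; case/andP: H2 => [h3 h4].
  have : be v < be v by apply: (lt_le_trans h); apply: (le_trans h3 h2).
  by rewrite ltxx.
- have h := @rank_sep v' v Hr (esym Ex) (esym Ed); case/andP: H1 => [h1 h2]; case/andP: H2 => [h3 h4].
  have : be v' < be v' by apply: (lt_le_trans h); apply: (le_trans h1 h4).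
  by rewrite ltxx.
- by apply: enum_rank_inj; apply: val_inj.
Qed.
Arguments disj {v v' t}.

Lemma Ie_ne v q : exists t, @Ie v q t.
Proof.
case: (HWv v) => [[Hi _ _ _] _ _ _ _].
case: (Hi q) => [[z Hz] _].
have Hd := del_gt0 v.
exists (al v + del v * z); rewrite /Ie.
have -> : - al v / del v + (del v)^-1 * (al v + del v * z) = z by field; rewrite gt_eqF.
done.
Qed.
Arguments Ie_ne {v} q.

Lemma copy_col v (q : wV (Wv v)) : (wf (Wv v) q : int) <= N%:Z + c v.
Proof.
case: (HWv v) => [[_ Hp _ _] _ Hle _ _].
have h1 := Hp q; have h2 := Hle q.
case: (cap_c v) => Hc _ _ _.
move: h1 h2; rewrite /Mv; lia.
Qed.
Arguments copy_col {v} q.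

Lemma cset_mem u v t : Ic u t -> J v t ->
  c v < fc u /\ fc u \in [seq z <- Cset Ic fc J v | (c v < z) && (z <= 0)].
Proof.
move=> Hu Hv.
have Hin : fc u \in Cset Ic fc J v.
  rewrite /Cset; apply: map_f; rewrite mem_filter mem_enum andbT.
  by apply/asboolP; exists t.
case: (cap_c v) => _ H0 _ _.
have Hlt : c v < fc u.
  rewrite ltNge; apply/negP => Hle.
  have : fc u \in undup [seq z <- Cset Ic fc J v | z <= c v].
    by rewrite mem_undup mem_filter Hle.
  by move/size0nil: H0 => ->.
split => //; by rewrite mem_filter Hlt cap_le0.
Qed.
Arguments cset_mem {u v t}.

Definition Cfilt v := [seq z <- Cset Ic fc J v | (c v < z) && (z <= 0)].
Lemma inl_bound v x : J v x ->
  (#|[set u : {u | keep u} | `[< Ic (val u) x >]]| <= size (undup (Cfilt v)))%N.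
Proof.
move=> Hx; set A := [set u : {u | keep u} | `[< Ic (val u) x >]].
rewrite cardE -(size_map (fun u => fc (val u))).
apply: uniq_leq_size.
  rewrite map_inj_in_uniq ?enum_uniq // => u1 u2.
  rewrite !mem_enum !inE => /asboolP H1 /asboolP H2 Hf.
  apply/eqP/negPn/negP => Hne.
  have Had : adj Ic (val u1) (val u2).
    split; last by exists x.
    by move=> E; apply: (negP Hne); apply/eqP/val_inj.
  exact: (cap_prop Had Hf).
move=> z /mapP[u]; rewrite mem_enum inE => /asboolP Hu ->.
by rewrite mem_undup; case: (cset_mem Hu Hx).
Qed.
Arguments inl_bound {v x}.


Lemma dinv_gt0 v : 0 < (del v)^-1.
Proof. by rewrite invr_gt0 del_gt0. Qed.

Lemma Ie_meets v (q q' : wV (Wv v)) :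
  Defs.meets (@Ie v q) (@Ie v q') <-> Defs.meets (wI _ q) (wI _ q').
Proof. exact: (pb_meets _ _ _ _ (dinv_gt0 v)). Qed.
Arguments Ie_meets {v q q'}.

Lemma tagged_inj v (q q' : wV (Wv v)) :
  existT (fun v => wV (Wv v)) v q = existT _ v q' -> q = q'.
Proof.
move=> E.
have := congr1 (tagged_as (existT (fun v => wV (Wv v)) v q)) E.
by rewrite !tagged_asE.
Qed.
Arguments tagged_inj {v q q'}.

Lemma In_wall : is_wall In fn.
Proof.
split.
- case=> [u|[v q]] /=; first exact: cap_int.
  case: (HWv v) => [[Hi _ _ _] _ _ _ _].
  exact: (pb_interval _ _ _ (dinv_gt0 v) (Hi q)).
- case=> [[u Hu]|[v q]] /=.
    by move: Hu; rewrite /keep; lia.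
  by case: (HWv v) => [[_ Hp _ _] _ _ _ _].
- move=> w1 w2 [Hne [t [H1 H2]]].
  case: w1 Hne H1 => [[u1 Hu1]|[v1 q1]]; case: w2 H2 => [[u2 Hu2]|[v2 q2]] /= H2 Hne H1.
  + have Had : adj Ic u1 u2.
      split; last by exists t.
      by move=> E; apply: Hne; congr inl; apply: val_inj; exact: E.
    have := cap_prop Had; have := Hu1; have := Hu2; rewrite /keep; lia.
  + have Hj := sub_J (Ie_in H2).
    case: (cset_mem H1 Hj) => Hlt _.
    have := copy_col q2; have := Hu1; rewrite /keep; lia.
  + have Hj := sub_J (Ie_in H1).
    case: (cset_mem H2 Hj) => Hlt _.
    have := copy_col q1; have := Hu2; rewrite /keep; lia.
  + have E := disj (Ie_in H1) (Ie_in H2); subst v2.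
    have Hq : q1 <> q2 by move=> E; apply: Hne; subst.
    case: (HWv v1) => [[_ _ Hp _] _ _ _ _].
    apply: Hp; split => //; apply/Ie_meets; by exists t.
- case=> [[u Hu]|[v q]] k k1 kle /=.
  + have Hu0 := Hu; rewrite /keep in Hu0; move: kle => /= kle.
    case: (boolP ((k : int) <= N%:Z + c u)) => Hk.
    * have HM : (0 < Mv u)%N by rewrite /Mv; case: (cap_c u) => ? _ _ _; lia.
      case: (HWv u) => [[_ _ _ Hnb] _ _ Htop _].
      case: (Htop HM) => q0 Hq0.
      have [q [_ Hq]] : exists q, in_closed_nbhd (wI (Wv u)) q q0 /\ wf _ q = k.
        apply: Hnb => //; rewrite Hq0 /Mv; case: (cap_c u) => ? _ _ _.
        move: kle => /=; lia.
      exists (inr (existT _ u q)); split => //.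
      right; split => //.
      case: (Ie_ne q) => t Ht; exists t; split => //=.
      by case: (cap_J u) => _ _ HJ; apply: HJ; apply: sub_J (Ie_in Ht).
    * case: (cap_c u) => _ _ _ Hnb.
      have [u' [Hn Hf]] : exists u', in_closed_nbhd Ic u' u /\ fc u' = k%:Z - N%:Z.
        apply: Hnb; move: Hk kle => /=; lia.
      have Hk' : keep u' by rewrite /keep Hf; lia.
      exists (inl (exist _ u' Hk')); split; last by rewrite /= Hf; lia.
      case: Hn => [E|[Hne Hm]].
        by left; congr inl; apply: val_inj.
      right; split => //=.
      by move=> E; apply: Hne; case: E => ->.
  + case: (HWv v) => [[_ _ _ Hnb] _ _ _ _].
    case: (Hnb q k k1 kle) => q' [Hn Hq].
    exists (inr (existT _ v q')); split => //.
    case: Hn => [->|[Hne Hm]]; first by left.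
    right; split => /=.
      by move=> E; apply: Hne; case: E => /tagged_inj.
    by apply/Ie_meets.
Qed.

Lemma In_depth x : (#|[set w | `[< In w x >]]|%:R : R) <= N%:R / r + B.
Proof.
rewrite (@card_sum_set _ _ (fun w => `[< In w x >])) natrD.
set A := #|[set u | _]|; set Bc := #|[set s | _]|.
have HA : (A <= #|Vc|)%N.
  apply: (leq_trans (max_card _)); rewrite card_sig; exact: max_card.
have Hr0 : 0 < r by apply: (lt_le_trans _ r1).
have Hpos : 0 <= N%:R / r by rewrite divr_ge0 // ltW.
have HAr : (A%:R : R) <= B by rewrite /B ler_nat.
case: (pselect (exists v, al v <= x <= be v)) => [[v Hv]|Hnone].
- have HB : (Bc <= #|[set q : wV (Wv v) | `[< @Ie v q x >]]|)%N.
    apply: (@card_tag_le Vc (fun v => wV (Wv v)) _ v) => -[v' q]; rewrite /= => /asboolP /= H.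
    exact: disj (Ie_in H) Hv.
  case: (posnP (Mv v)) => HM.
  + have H0 : #|[set q : wV (Wv v) | `[< @Ie v q x >]]| = 0%N.
      apply: eq_card0 => q; rewrite inE.
      have := HWv v; rewrite HM => /winv0_empty /(_ q) [].
    move: HB; rewrite H0 leqn0 => /eqP ->; rewrite mulr0n addr0; lra.
  + case: (HWv v) => _ _ _ _ Hd.
    have HB' := Hd (- al v / del v + (del v)^-1 * x).
    have HBr : (Bc%:R : R) <= (Mv v)%:R / r + B.
      by apply: le_trans HB'; rewrite ler_nat.
    have HA2 := inl_bound (sub_J Hv).
    case: (cap_c v) => Hc _ Hsz _.
    have HAc : (A%:R : R) <= - (c v)%:~R / r.
      by apply: le_trans Hsz; rewrite ler_nat.
    have E : (Mv v)%:Z = N%:Z + c v by move: HM; rewrite /Mv; lia.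
    have E' : ((Mv v)%:R : R) = N%:R + (c v)%:~R.
      by rewrite -[(N%:R : R)]/((N%:Z)%:~R) -intrD -E.
    rewrite E' mulrDl in HBr; rewrite mulNr in HAc; lra.
- have H0 : Bc = 0%N.
    apply: eq_card0 => -[v q]; rewrite inE; apply/asboolP => /= H.
    by apply: Hnone; exists v; apply: Ie_in H.
  rewrite H0 mulr0n addr0; lra.
Qed.

Variable Mb : R.
Hypothesis Mb0 : 0 < Mb.
Hypothesis HMb : forall v t, Ic v t -> - Mb <= t <= Mb.

Lemma In_bound w t : In w t -> - Mb <= t <= Mb.
Proof.
case: w => [[u Hu]|[v q]] /= H; first exact: HMb H.
apply: (HMb (v := v)); case: (cap_J v) => _ _ HJ; apply: HJ; exact: sub_J (Ie_in H).
Qed.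

Definition In2 := @pbI Vn In (- Mb) (2 * Mb).

Lemma build_winv : winv r B N (@Wall Vn In2 fn).
Proof.
have m0 : 0 < 2 * Mb by rewrite mulr_gt0.
split => /=.
- exact: (pb_wall _ _ _ _ m0 _ In_wall).
- move=> w z /In_bound /andP[h1 h2]; apply/andP; split; nra.
- case=> [[u Hu]|[v q]] /=.
    by have := cap_le0 u; move: Hu; rewrite /keep; lia.
  case: (HWv v) => _ _ Hle _ _.
  by apply: leq_trans (Hle q) _; rewrite /Mv leq_subr.
- move=> _; case: Hcap => [_ [[_ [v0 Hv0]] _] _ _ _].
  have Hk : keep v0 by rewrite /keep Hv0; lia.
  by exists (inl (exist _ v0 Hk)) => /=; rewrite Hv0 add0r.
- move=> z; exact: In_depth.
Qed.

End Build.

Definition empty_wall := @Wall void (fun _ _ => False) (fun _ => 0%N).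

Lemma empty_winv r B : 0 <= B -> 0 < r -> winv r B 0 empty_wall.
Proof.
move=> B0 r0; split => //=; try by [split; case | case].
move=> x; rewrite mul0r add0r.
rewrite (_ : #|_| = 0%N) //; by apply: eq_card0; case.
Qed.

Lemma walls_exist (r : R) (Vc : finType) (Ic : Vc -> R -> Prop) (fc : Vc -> int)
  (J : Vc -> R -> Prop) (c : Vc -> int) :
  1 <= r -> is_cap Ic r fc J c -> forall N, exists w, winv r (B Vc) N w.
Proof.
move=> r1 Hcap.
have r0 : 0 < r by apply: (lt_le_trans _ r1).
have B0 : 0 <= B Vc by rewrite /B.
have HH : forall P : R -> Prop, exists xy : R * R,
    positive_length P -> [/\ P xy.1, P xy.2 & xy.1 < xy.2].
  move=> P; case: (pselect (positive_length P)) => [[x [y [H1 [H2 H3]]]]|Hn].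
    by exists (x, y).
  by exists (0, 0).
case: (boolp.choice HH) => ch Hch.
have HH2 : forall v, exists ab : R * R, forall x, Ic v x -> ab.1 <= x <= ab.2.
  move=> v; case: Hcap => [[_ H] _ _ _ _]; case: (H v) => _ [a [b Hab]].
  by exists (a, b) => x /Hab [h1 h2]; rewrite h1 h2.
case: (boolp.choice HH2) => ab Hab.
pose Mb := 1 + \sum_(v : Vc) (`|(ab v).1| + `|(ab v).2|).
have Hsum : forall v, `|(ab v).1| + `|(ab v).2| <= \sum_(v : Vc) (`|(ab v).1| + `|(ab v).2|).
  move=> v; rewrite (bigD1 v) //= lerDl; apply: sumr_ge0 => i _.
  by rewrite addr_ge0.
have Mb0 : 0 < Mb.
  rewrite /Mb ltr_pwDl // sumr_ge0 // => i _; by rewrite addr_ge0.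
have HMb : forall v t, Ic v t -> - Mb <= t <= Mb.
  move=> v t /Hab /andP[h1 h2]; have := Hsum v.
  have := ler_norm (ab v).2; have := ler_norm (- (ab v).1); rewrite normrN /Mb.
  have := normr_ge0 (ab v).1; have := normr_ge0 (ab v).2.
  move=> n1 n2 e1 e2 e3; apply/andP; split; lra.
elim/ltn_ind => N IH.
case: (posnP N) => [->|N1]; first by exists empty_wall; exact: empty_winv.
have HH3 : forall M, exists w, (M < N)%N -> winv r (B Vc) M w.
  move=> M; case: (ltnP M N) => HM; first by case: (IH M HM) => w Hw; exists w.
  by exists empty_wall.
case: (boolp.choice HH3) => Wf HWf.
eexists; exact: (build_winv r1 Hcap _ Hch _ N1 _ HWf _ Mb0 HMb).
Qed.



Lemma colors_ge (V : finType) (I : V -> R -> Prop) (f : V -> nat) :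
  is_wall I f -> forall v, (f v <= colors_used f)%N.
Proof.
case=> _ _ _ Hnb v.
have -> : f v = size (iota 1 (f v)) by rewrite size_iota.
apply: uniq_leq_size; first exact: iota_uniq.
move=> k; rewrite mem_iota => /andP[k1 k2].
case: (Hnb v k k1 _); first by move: k2; rewrite add1n ltnS.
move=> u [_ <-]; rewrite mem_undup; apply: map_f; exact: mem_enum.
Qed.

Section Union.
Variables (w : wall) (k : nat).
Hypothesis Hw : is_wall (wI w) (wf w).
Hypothesis H01 : forall v x, wI w v x -> 0 <= x <= 1.
Hypothesis Hd : forall x, (#|[set v | `[< wI w v x >]]| <= k)%N.

Definition UV := (wV w + 'I_k)%type.
Definition UI (u : UV) : R -> Prop :=
  match u with inl v => wI w v | inr _ => fun x => 2 <= x <= 3 end.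
Definition Uf (u : UV) : nat :=
  match u with inl v => wf w v | inr i => (nat_of_ord i).+1 end.

Lemma seg_int : is_interval (fun x : R => 2 <= x <= 3).
Proof.
split; first by exists 2; apply/andP; split; lra.
move=> x y z /andP[h1 h2] /andP[h3 h4] h5 h6; apply/andP; split; lra.
Qed.

Lemma U_wall : is_wall UI Uf.
Proof.
case: Hw => Hi Hp Hpr Hnb.
split.
- case=> [v|i] /=; [exact: Hi | exact: seg_int].
- by case=> [v|i] /=.
- move=> u1 u2 [Hne [t [H1 H2]]].
  case: u1 Hne H1 => [v1|i1]; case: u2 H2 => [v2|i2] /= H2 Hne H1.
  + apply: Hpr; split; last by exists t.
    by move=> E; apply: Hne; rewrite E.
  + by have := H01 _ _ H1; move: H2 => /andP[? ?] /andP[? ?]; exfalso; clear Hne; lra.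
  + by have := H01 _ _ H2; move: H1 => /andP[? ?] /andP[? ?]; exfalso; clear Hne; lra.
  + move=> [E]; apply: Hne; congr inr; exact: val_inj.
- case=> [v|i] z z1 zle /=.
  + case: (Hnb v z z1 zle) => u [Hn Hf]; exists (inl u); split => //.
    case: Hn => [->|[Hne Hm]]; first by left.
    by right; split => //; move=> [E]; apply: Hne.
  + rewrite /= in zle; have Hz : (z.-1 < k)%N by move: (ltn_ord i) zle z1; lia.
    exists (inr (Ordinal Hz)); split; last by rewrite /= prednK //.
    case: (boolP (z.-1 == i)) => Hzi.
      by left; congr inr; apply: val_inj; apply/eqP.
    right; split.
      by move=> [E]; move: Hzi; rewrite -E eqxx.
    by exists 2; split; apply/andP; split; lra.
Qed.

Lemma U_omega : omega UI = k.
Proof.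
apply/eqP; rewrite eqn_leq; apply/andP; split.
  apply: omega_le; first by case: U_wall.
  move=> x; rewrite (@card_sum_set _ _ (fun u => `[< UI u x >])) /=.
  case: (boolP `[< 2 <= x <= 3 >]) => /asboolP Hx.
  + rewrite (_ : #|[set v | `[< wI w v x >]]| = 0%N).
      by rewrite add0n; apply: (leq_trans (max_card _)); rewrite card_ord.
    apply: eq_card0 => v; rewrite inE; apply/asboolP => H.
    by have := H01 _ _ H; move: Hx => /andP[? ?] /andP[? ?]; lra.
  + rewrite (_ : #|[set _ : 'I_k | false]| = 0%N) ?addn0; first exact: Hd.
    by apply: eq_card0 => i; rewrite inE.
apply: (@leq_trans #|[set @inr (wV w) 'I_k i | i : 'I_k]|).
  by rewrite card_imset ?cardsT ?card_ord //; move=> i j [].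
apply: omega_ge => u v /imsetP[i _ ->] /imsetP[j _ ->] Hne.
split => //; exists 2; split => /=; apply/andP; split; lra.
Qed.

Lemma U_colors v : (wf w v <= colors_used Uf)%N.
Proof. exact: (colors_ge U_wall (inl v)). Qed.

End Union.

Lemma key (r : R) (Vc : finType) (Ic : Vc -> R -> Prop) (fc : Vc -> int)
  (J : Vc -> R -> Prop) (c : Vc -> int) :
  1 <= r -> is_cap Ic r fc J c -> forall k : nat,
  exists (V : finType) (I : V -> R -> Prop) (f : V -> nat),
    [/\ is_wall I f, omega I = k & r * k%:R - (r * B Vc + 1) <= (colors_used f)%:R].
Proof.
move=> r1 Hcap k.
have r0 : 0 < r by apply: (lt_le_trans _ r1).
set x := r * (k%:R - B Vc).
pose N := if 0 <= x then Num.trunc x else 0%N.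
have HN : (0 < N)%N -> 0 <= x /\ N%:R <= x.
  rewrite /N; case: ifP => // H _; split => //.
  by case/andP: (truncn_itv H).
have HN2 : x - 1 <= N%:R.
  rewrite /N; case: ifP => H.
    by case/andP: (truncn_itv H) => _ /ltW; rewrite -natr1; lra.
  by move/negbT: H; rewrite -ltNge => H; lra.
case: (walls_exist r1 Hcap N) => w Hw.
have Hw' := Hw; case: Hw' => Hwall H01 Hle Htop Hdep.
have Hd : forall y, (#|[set v | `[< wI w v y >]]| <= k)%N.
  move=> y; case: (posnP N) => HN0.
    rewrite (_ : #|_| = 0%N) //; apply: eq_card0 => v.
    by move: Hw; rewrite HN0 => /winv0_empty /(_ v).
  case: (HN HN0) => hx1 hx2.
  rewrite -(ler_nat R); apply: (le_trans (Hdep y)).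
  have : N%:R / r <= x / r by rewrite ler_pM2r ?invr_gt0.
  have -> : x / r = k%:R - B Vc by rewrite /x mulrC mulKf ?gt_eqF.
  lra.
exists (UV w k), (@UI w k), (@Uf w k); split.
- exact: (U_wall w k Hwall H01).
- exact: (U_omega w k Hwall H01 Hd).
- have -> : r * k%:R - (r * B Vc + 1) = x - 1 by rewrite /x; ring.
  apply: (le_trans HN2); rewrite ler_nat.
  case: (posnP N) => [->|HN0] //.
  case: (Htop HN0) => v0 <-; exact: (U_colors w k Hwall H01).
Qed.

Unset Implicit Arguments.

Theorem mainTheorem3 (r : R) :
  1 <= r ->
  (exists (V : finType) (I : V -> R -> Prop) (f : V -> int)
          (J : V -> R -> Prop) (c : V -> int), is_cap I r f J c) ->
  (r%:E <= Rsup)%E /\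
  exists b : R, forall k : nat,
    exists (V : finType) (I : V -> R -> Prop) (f : V -> nat),
      [/\ is_wall I f, omega I = k & r * k%:R - b <= (colors_used f)%:R].
Proof.
move=> r1 [Vc [Ic [fc [J [c Hcap]]]]].
have Hkey := key r1 Hcap.
split; last first.
  by exists (r * B Vc + 1) => k; case: (Hkey k) => V [I [f [H1 H2 H3]]]; exists V, I, f.
set b := r * B Vc + 1.
have r0 : 0 < r by apply: (lt_le_trans _ r1).
have b0 : 0 < b by rewrite /b ltr_wpDl // mulr_ge0 // ltW.
have Hlow : forall k, (0 < k)%N -> (((r * k%:R - b) / k%:R)%:E <= Rsup)%E.
  move=> k k0; case: (Hkey k) => V [I [f [Hw Hom Hc]]].
  have HV : exists v : V, True.
    case: (pselect (exists v : V, True)) => // Hn.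
    have : (omega I <= 0)%N.
      apply/bigmax_leqP => A _; apply: (leq_trans (max_card _)).
      by rewrite leqn0; apply/eqP; apply: eq_card0 => v; exfalso; apply: Hn; exists v.
    by rewrite Hom leqn0 => /eqP E; rewrite E in k0.
  apply: (le_trans _ (@ereal_sup_ubound _ _ (((chiFF I)%:R / (omega I)%:R : R)%:E) _)).
    rewrite lee_fin Hom ler_pM2r ?invr_gt0 ?ltr0n //.
    apply: (le_trans Hc); rewrite ler_nat; exact: chiFF_ge Hw.
  exists V, I; split => //; by case: Hw.
move E: Rsup => e; case: e E => [s| |] E; last first.
- by have := Hlow 1%N isT; rewrite E leeNy_eq.
- exact: leey.
rewrite lee_fin leNgt; apply/negP => Hs.
have rs : 0 < r - s by rewrite subr_gt0.
have Hq : 0 <= b / (r - s) by rewrite divr_ge0 // ltW.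
set k := (Num.trunc (b / (r - s))).+1.
have Hk : b / (r - s) < k%:R by case/andP: (truncn_itv Hq).
have := Hlow k isT; rewrite E lee_fin.
have k0 : (0 : R) < k%:R by rewrite ltr0n.
rewrite ler_pdivrMr // => H.
have E2 : b = (b / (r - s)) * (r - s) by rewrite divfK // gt_eqF.
move: Hk H E2; set q := b / (r - s); set kk := k%:R => Hk H E2.
nra.
Qed.
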